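(* Let $\Theta$ be a set of hypotheses, $q:\Theta\to\mathbb{R}^k$ a feature map, $\hat L$ the training loss and $V$ the validation loss. Suppose there exist a vector $\lambda^*\in\mathbb{R}^k$ and a scalar $\alpha^*>0$ such that \[ \alpha^*V(\theta)=\hat L(\theta)+\lambda^*\cdot q(\theta)\quad\text{for all }\theta\in\Theta. \] Let $\theta_1,\dots,\theta_{k+1}\in\Theta$ be such that the $k+1$ vectors $(V(\theta_i),\hat L(\theta_i))\oplus q(\theta_i)\in\mathbb{R}^{k+2}$ are linearly independent, where $\oplus$ denotes concatenation. Let $D=\{(V(\theta_i),\hat L(\theta_i),q(\theta_i)) : 1\le i\le k+1\}$. Then LearnLinReg$(D)$ returns $(\alpha^*,\lambda^* )$.
   Context: Algorithm LearnLinReg takes tuples $(V_i,\hat L_i,q_i)$, $1\le i\le m$, with $q_i\in\mathbb{R}^k$, and proceeds as follows. 1. Sort and reindex the tuples so that $V_1\le\dots\le V_m$. 2. For $i^*=1,2,\dots,m$ in turn, solve the linear program in variables $\alpha\in\mathbb{R}$, $\lambda\in\mathbb{R}^k$, $\Delta_i,f_i\in\mathbb{R}$: - minimize $\sum_{i=1}^m\Delta_i$, - subject to $\alpha\ge0$; $\Delta_i\ge0$, $f_i=\alpha V_i+\Delta_i$, $f_i=\lambda\cdot q_i+\hat L_i$ and $f_{i^*}\le f_i$ for all $i$. If this LP is feasible, return its optimal $(\alpha,\lambda)$. 3. If no LP is feasible, return an error. *)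

(* Defs.v *)
From HB Require Import structures.
From mathcomp Require Import all_boot all_order all_algebra.
Set Implicit Arguments. Unset Strict Implicit. Unset Printing Implicit Defensive.
Import Order.TTheory GRing.Theory Num.Theory.
Local Open Scope ring_scope.

Definition dotv (R : realFieldType) (k : nat) (u v : 'rV[R]_k) : R :=
  \sum_(j < k) u 0 j * v 0 j.

(* Input of LearnLinReg: m tuples (V i, Lhat i, q i), indexed by 'I_m. *)

Definition lp_feasible (R : realFieldType) (m k : nat)
    (V Lh : 'I_m -> R) (q : 'I_m -> 'rV[R]_k) (istar : 'I_m)
    (a : R) (lam : 'rV[R]_k) (Delta f : 'I_m -> R) : Prop :=
  0 <= a /\
  forall i : 'I_m,
    [/\ 0 <= Delta i, f i = a * V i + Delta i,
        f i = dotv lam (q i) + Lh i & f istar <= f i].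

Definition lp_is_feasible (R : realFieldType) (m k : nat)
    (V Lh : 'I_m -> R) (q : 'I_m -> 'rV[R]_k) (istar : 'I_m) : Prop :=
  exists a lam Delta f, @lp_feasible R m k V Lh q istar a lam Delta f.

Definition lp_optimal (R : realFieldType) (m k : nat)
    (V Lh : 'I_m -> R) (q : 'I_m -> 'rV[R]_k) (istar : 'I_m)
    (a : R) (lam : 'rV[R]_k) (Delta f : 'I_m -> R) : Prop :=
  @lp_feasible R m k V Lh q istar a lam Delta f /\
  forall a' lam' Delta' f',
    @lp_feasible R m k V Lh q istar a' lam' Delta' f' ->
    \sum_(i < m) Delta i <= \sum_(i < m) Delta' i.

(* Step 1: s is a sorting reindexing: position p holds tuple s p, V nondecreasing. *)
Definition sorting_perm (R : realFieldType) (m : nat) (V : 'I_m -> R)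
    (s : 'I_m -> 'I_m) : Prop :=
  bijective s /\ forall p p' : 'I_m, (p <= p')%N -> V (s p) <= V (s p').

(* Step 3: with sorting s, no LP is feasible: the algorithm returns an error. *)
Definition LearnLinReg_errors (R : realFieldType) (m k : nat)
    (V Lh : 'I_m -> R) (q : 'I_m -> 'rV[R]_k) (s : 'I_m -> 'I_m) : Prop :=
  forall p : 'I_m, ~ lp_is_feasible V Lh q (s p).

(* Step 2: with sorting s, the algorithm may return (a, lam): the LP at the
   first position p whose LP is feasible has (a, lam) as (part of) an
   optimal solution. *)
Definition LearnLinReg_returns (R : realFieldType) (m k : nat)
    (V Lh : 'I_m -> R) (q : 'I_m -> 'rV[R]_k) (s : 'I_m -> 'I_m)
    (a : R) (lam : 'rV[R]_k) : Prop :=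
  exists p : 'I_m,
    (forall p' : 'I_m, (p' < p)%N -> ~ lp_is_feasible V Lh q (s p')) /\
    lp_is_feasible V Lh q (s p) /\
    exists Delta f, lp_optimal V Lh q (s p) a lam Delta f.

Definition concat_vec (R : realFieldType) (k : nat) (v l : R) (x : 'rV[R]_k)
  : 'rV[R]_(2 + k) :=
  row_mx (\row_(j < 2) (if j == 0 :> nat then v else l)) x.

(* Main.v *)
Require Import Defs.
From HB Require Import structures.
From mathcomp Require Import all_boot all_order all_algebra.
From mathcomp Require Import ring lra.
Import Order.TTheory GRing.Theory Num.Theory.
Local Open Scope ring_scope.
Lemma concat_mul (R : realFieldType) (k : nat) (v l a b : R) (x mu : 'rV[R]_k) :
  (concat_vec v l x *m (concat_vec a b mu)^T) 0 0 = v * a + l * b + dotv x mu.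
Proof.
rewrite /concat_vec tr_row_mx mul_row_col !mxE /dotv.
rewrite !big_ord_recl big_ord0 !mxE /=.
rewrite addr0; congr (_ + _).
by apply: eq_bigr => j _; rewrite !mxE.
Qed.

Lemma concat_inj (R : realFieldType) (k : nat) (v l a b : R) (x mu : 'rV[R]_k) :
  concat_vec v l x = concat_vec a b mu -> [/\ v = a, l = b & x = mu].
Proof.
rewrite /concat_vec => /eq_row_mx [h1 ->]; split=> //.
- by have := congr1 (fun M : 'M[R]_(1,2) => M 0 0) h1; rewrite !mxE.
- by have := congr1 (fun M : 'M[R]_(1,2) => M 0 (1 : 'I_2)) h1; rewrite !mxE.
Qed.

Lemma scale_concat (R : realFieldType) (k : nat) (t v l : R) (x : 'rV[R]_k) :
  t *: concat_vec v l x = concat_vec (t * v) (t * l) (t *: x).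
Proof.
rewrite /concat_vec scale_row_mx; congr row_mx.
by apply/rowP => j; rewrite !mxE; case: ifP.
Qed.

Lemma kernel_unique (R : realFieldType) (k : nat)
  (M : 'M[R]_(k.+1, 2 + k)) (hM : row_free M) (w c : 'rV[R]_(2 + k)) :
  w *m M^T = 0 -> c *m M^T = 0 -> w != 0 -> exists t, c = t *: w.
Proof.
move=> hw hc wn0.
have rK : \rank (kermx M^T) = 1%N.
  rewrite mxrank_ker mxrank_tr. by move/eqP: hM => ->; rewrite subSnn.
have wK : (w <= kermx M^T)%MS by apply/sub_kermxP.
have cK : (c <= kermx M^T)%MS by apply/sub_kermxP.
have Kw : (kermx M^T <= w)%MS.
  by rewrite -(eq_leqif (mxrank_leqif_sup wK)) rK rank_rV wn0.
by apply/sub_rVP; apply: submx_trans Kw.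
Qed.
Lemma ker_cond (R : realFieldType) (m n : nat) (r : 'I_m -> 'rV[R]_n) (w : 'rV[R]_n) :
  (forall i, (r i *m w^T) 0 0 = 0) -> w *m (\matrix_i r i)^T = 0.
Proof.
move=> h; apply: trmx_inj; rewrite trmx_mul trmxK trmx0.
apply/matrixP => i j; rewrite ord1 mxE [RHS]mxE.
transitivity ((r i *m w^T) 0 0); last exact: h i.
rewrite [RHS]mxE; apply: eq_bigr => l _; by rewrite mxE.
Qed.

Lemma dotvC (R : realFieldType) (k : nat) (u v : 'rV[R]_k) : dotv u v = dotv v u.
Proof. by apply: eq_bigr => j _; rewrite mulrC. Qed.

Lemma dotvB (R : realFieldType) (k : nat) (u v x : 'rV[R]_k) :
  dotv (u - v) x = dotv u x - dotv v x.
Proof. rewrite /dotv -sumrB; apply: eq_bigr => j _. by rewrite !mxE mulrBl. Qed.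

Lemma dotvN (R : realFieldType) (k : nat) (u v : 'rV[R]_k) : dotv u (- v) = - dotv u v.
Proof. rewrite /dotv -sumrN; apply: eq_bigr => j _. by rewrite !mxE mulrN. Qed.

Lemma concat0 (R : realFieldType) (k : nat) : concat_vec 0 0 (0 : 'rV[R]_k) = 0.
Proof.
rewrite /concat_vec -row_mx0; congr row_mx.
by apply/rowP => j; rewrite !mxE; case: ifP.
Qed.

Theorem theorem1 (R : realFieldType) (k : nat) (Theta : Type)
    (q : Theta -> 'rV[R]_k) (Lhat V : Theta -> R)
    (lamstar : 'rV[R]_k) (astar : R)
    (hastar : 0 < astar)
    (hrel : forall th : Theta, astar * V th = Lhat th + dotv lamstar (q th))
    (th : 'I_k.+1 -> Theta)
    (hindep : row_free
       (\matrix_(i < k.+1) concat_vec (V (th i)) (Lhat (th i)) (q (th i)))) :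
  let VD := fun i => V (th i) in
  let LD := fun i => Lhat (th i) in
  let qD := fun i => q (th i) in
  forall s : 'I_k.+1 -> 'I_k.+1, sorting_perm VD s ->
    ~ LearnLinReg_errors VD LD qD s /\
    (exists a lam, LearnLinReg_returns VD LD qD s a lam) /\
    (forall a lam, LearnLinReg_returns VD LD qD s a lam ->
       a = astar /\ lam = lamstar).
Proof.
move=> VD LD qD s [[sinv hs1 hs2] hmono].
pose i0 := s ord0.
have hmin : forall i, VD i0 <= VD i.
  by move=> i; rewrite -(hs2 i); apply: hmono.
have feas_opt : lp_optimal VD LD qD i0 astar lamstar (fun _ => 0) (fun i => astar * VD i).
  split.
    split; first exact: ltW.
    move=> i; split => //; first by rewrite addr0.
      by rewrite /VD hrel addrC.
    by rewrite ler_wpM2l // ?(ltW hastar) ?hmin.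
  move=> a' l' D' f' [_ hf]; rewrite big1 //; apply: sumr_ge0 => i _.
  by case: (hf i).
have feas : lp_is_feasible VD LD qD i0.
  by exists astar, lamstar, (fun _ => 0), (fun i => astar * VD i); exact: feas_opt.1.
split; first by move=> herr; exact: herr ord0 feas.
split.
  exists astar, lamstar, ord0; split; first by move=> p'; rewrite ltn0.
  by split => //; exists (fun _ => 0), (fun i => astar * VD i).
move=> a lam [p [hbef [_ [D [f [[ha hf] hopt]]]]]].
have p0 : p = ord0.
  apply/val_inj => /=; case: (posnP p) => // hp.
  by case: (hbef ord0 hp feas).
subst p.
have hsum : \sum_(i < k.+1) D i <= 0.
  by have := hopt _ _ _ _ feas_opt.1; rewrite big1_eq.
have D0 : forall i, D i = 0.
  move=> i; apply: (psumr_eq0P (P := predT) (F := D)) => //.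
    by move=> j _; case: (hf j).
  by apply/le_anti; rewrite hsum /=; apply: sumr_ge0 => j _; case: (hf j).
have hfit : forall i, a * VD i = dotv lam (qD i) + LD i.
  by move=> i; case: (hf i) => _ h1 h2 _; rewrite -h2 h1 D0 addr0.
set M := \matrix_(i < k.+1) concat_vec (V (th i)) (Lhat (th i)) (q (th i)).
pose w := concat_vec astar (-1) (- lamstar).
pose c := concat_vec (a - astar) 0 (lamstar - lam).
have hw : w *m M^T = 0.
  apply: ker_cond => i; rewrite concat_mul dotvN dotvC.
  have := hrel (th i); rewrite mulrC; lra.
have hc : c *m M^T = 0.
  apply: ker_cond => i; rewrite concat_mul dotvC dotvB.
  have := hrel (th i); have := hfit i; rewrite /VD /LD /qD => h1 h2.
  rewrite mulrBr mulrC [_ * astar]mulrC; lra.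
have wn0 : w != 0.
  apply/negP => /eqP hw0; move: hw0; rewrite -concat0 => /concat_inj [_ h _].
  by move/eqP: h; rewrite oppr_eq0 oner_eq0.
have [t ht] := @kernel_unique _ _ _ hindep _ _ hw hc wn0.
move: ht; rewrite /c /w scale_concat => /concat_inj [e1 e2 e3].
have t0 : t = 0 by move: e2; rewrite mulrN1 => /eqP; rewrite eq_sym oppr_eq0 => /eqP.
move: e1 e3; rewrite t0 mul0r scale0r => /subr0_eq -> /subr0_eq ->; by split.
Qed.
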